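(* Consider the difference equation $x_k+a_1x_{k-1}+\dots+a_nx_{k-n}=0$, $k\ge n$, with $a_i\in\mathbb R$. There exists an initial condition $x^{(0)}=(x_0,\dots,x_{n-1})$ with $\|x^{(0)}\|_\infty=1$ whose solution satisfies $\max_{k\ge n}|x_k|>1$ if and only if $\sum_{i=1}^n|a_i|>1$. *)

(* Defs.v *)
From HB Require Import structures.
From mathcomp Require Import all_boot all_order all_algebra.
Set Implicit Arguments. Unset Strict Implicit. Unset Printing Implicit Defensive.
Import Order.TTheory GRing.Theory Num.Theory.
Local Open Scope ring_scope.

(* x solves x_k + a_1 x_{k-1} + ... + a_n x_{k-n} = 0 for all k >= n.
   Coefficients are 1-indexed: a 1, ..., a n (a 0 is unused). *)
Definition is_solution (R : numDomainType) (n : nat) (a : nat -> R) (x : nat -> R) : Prop :=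
  forall k : nat, (n <= k)%N -> x k + \sum_(1 <= i < n.+1) a i * x (k - i)%N = 0.

Definition init_norm (R : realDomainType) (n : nat) (x : nat -> R) : R :=
  \big[Num.max/0]_(i < n) `|x i|.

(* Main.v *)
Require Import Defs.
From HB Require Import structures.
From mathcomp Require Import all_boot all_order all_algebra.
From mathcomp Require Import zify.
Import Order.TTheory GRing.Theory Num.Theory.
Local Open Scope ring_scope.

Section Aux.
Variables (R : realFieldType) (n : nat) (a : nat -> R) (init : nat -> R).

Definition valf (k : nat) (s : seq R) : R :=
  if (k < n)%N then init k else - \sum_(1 <= i < n.+1) a i * nth 0 s (k - i)%N.

Fixpoint pre (k : nat) : seq R :=
  match k with 0 => [::] | k'.+1 => rcons (pre k') (valf k' (pre k')) end.

Definition xs k := valf k (pre k).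

Lemma size_pre k : size (pre k) = k.
Proof. by elim: k => //= k IH; rewrite size_rcons IH. Qed.

Lemma nth_pre k j : (j < k)%N -> nth 0 (pre k) j = xs j.
Proof.
elim: k => // k IH; rewrite ltnS leq_eqVlt => /orP[/eqP->|hj] /=.
  by rewrite nth_rcons size_pre ltnn eqxx.
by rewrite nth_rcons size_pre hj IH.
Qed.

Lemma xs_sol : is_solution n a xs.
Proof.
move=> k hk; rewrite /xs /valf ltnNge hk /=.
rewrite (_ : \sum_(1 <= i < n.+1) a i * nth 0 (pre k) (k - i)%N =
             \sum_(1 <= i < n.+1) a i * xs (k - i)%N) ?addNr //.
apply: eq_big_nat => i /andP[h1 h2]; rewrite nth_pre //.
by move: h1 h2 hk; lia.
Qed.

Lemma xs_init k : (k < n)%N -> xs k = init k.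
Proof. by rewrite /xs /valf => ->. Qed.

End Aux.

Theorem mainTheorem7 (R : realFieldType) (n : nat) (a : nat -> R) :
  (exists x : nat -> R,
      is_solution n a x /\ init_norm n x = 1 /\
      exists k : nat, (n <= k)%N /\ 1 < `|x k|)
  <-> 1 < \sum_(1 <= i < n.+1) `|a i|.
Proof.
split.
  move=> [x [hs [hn [k [hk hx]]]]].
  rewrite ltNge; apply/negP => hS.
  suff : forall m, `|x m| <= 1 by move/(_ k); rewrite leNgt hx.
  move=> m; elim: m {-2}m (leqnn m) => [|m IH] j hj.
    case: (ltnP j n) => hjn.
      rewrite -hn /init_norm (le_bigmax _ (fun i : 'I_n => `|x i|) (Ordinal hjn)) //.
    have [n0 j0] : n = 0%N /\ j = 0%N by move: hjn hj; lia.
    have := hs 0%N; rewrite n0 => /(_ isT).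
    by rewrite big_geq // addr0 j0 => ->; rewrite normr0.
  case: (ltnP j n) => hjn.
    by rewrite -hn /init_norm (le_bigmax _ (fun i : 'I_n => `|x i|) (Ordinal hjn)).
  have := hs j hjn; move/eqP; rewrite addr_eq0 => /eqP ->; rewrite normrN.
  apply: le_trans hS; apply: le_trans (ler_norm_sum _ _ _) _.
  apply: ler_sum_nat => i /andP[h1 h2]; rewrite normrM.
  rewrite -[X in _ <= X]mulr1; apply: ler_wpM2l => //; apply: IH.
  by move: h1 h2 hj hjn; lia.
move=> hS.
have n0 : (0 < n)%N.
  by move: hS; case: n => //; rewrite big_geq // ltr10.
pose init := fun j : nat => if 0 <= a (n - j)%N then -1 else (1 : R).
have hinit : forall j, `|init j| = 1.
  by move=> j; rewrite /init; case: ifP; rewrite ?normrN normr1.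
exists (@xs R n a init); split; first exact: (@xs_sol R n a init).
split.
  apply/eqP; rewrite eq_le; apply/andP; split.
    apply: bigmax_le => // i _; by rewrite xs_init // hinit.
  have := le_bigmax 0 (fun i : 'I_n => `|@xs R n a init i|) (Ordinal n0).
  by rewrite /= xs_init // hinit.
exists n; split=> //.
have := @xs_sol R n a init n (leqnn n); move/eqP; rewrite addr_eq0 => /eqP ->.
rewrite normrN (_ : \sum_(1 <= i < n.+1) a i * @xs R n a init (n - i)%N =
   - \sum_(1 <= i < n.+1) `|a i|).
  by rewrite normrN ger0_norm // (le_trans ler01 (ltW hS)).
rewrite -sumrN; apply: eq_big_nat => i /andP[h1 h2].
rewrite xs_init; last by rewrite ltn_subrL n0 h1.
rewrite /init subKn // ; case: ifP => ha.
  by rewrite ger0_norm // mulrN1.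
by rewrite ltr0_norm ?mulr1 ?opprK // ltNge ha.
Qed.
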